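(* Let $A$ be a linear Nakayama algebra with $n$ simple modules, with vertices labelled $1,\dots,n$ so that the arrows are exactly $i\to i+1$ for $1\le i<n$. Then the Coxeter permutation of $A$ (with respect to this labelling) coincides with Ringel's homological permutation $\hat h$ of $A$.
   Context: A linear Nakayama algebra is $A=KQ/I$, $K$ a field, $Q$ the quiver $1\to 2\to\cdots\to n$ and $I$ an admissible ideal; it has finite global dimension. Modules are finitely generated right modules; $S(i)$, $P(i)$, $I(i)$ denote the simple, indecomposable projective and indecomposable injective modules at vertex $i$. The Cartan matrix $\phi_A$ has entries $\phi_{i,j}=\dim_K e_jAe_i$; the Coxeter matrix is $C_A=-\phi_A^T\phi_A^{-1}$. A Bruhat decomposition of an invertible matrix $M$ is $M=U_1PU_2$ with $U_1,U_2$ invertible upper triangular and $P$ a permutation matrix (uniquely determined). The Coxeter permutation is $p_c$ with $p_c(i)=j$ if the nonzero entry in column $i$ of $P$ (from $C_A=U_1PU_2$) lies in row $j$. Ringel's homological bijection: for a simple module $S$ with injective envelope $I(S)$, let $e(S)=\min\{\operatorname{pd} S,\operatorname{pd} I(S)\}$, let $NS=I(S)$ if $e(S)$ is even and $NS=S$ if $e(S)$ is odd, and set $h(S)=\operatorname{top}\Omega^{e(S)}(NS)$ (top of the $e(S)$-th syzygy). The homological permutation $\hat h$ of $\{1,\dots,n\}$ is defined by $\hat h(i)=j$ iff $h(S(i))\cong S(j)$. *)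

(* Defs.v *)
From mathcomp Require Import all_boot all_order all_algebra all_fingroup.
Set Implicit Arguments.
Unset Strict Implicit.
Unset Printing Implicit Defensive.
Import GRing.Theory.

(* Linear Nakayama algebras A = KQ/I, Q : 1 -> 2 -> ... -> n, I admissible.   *)
(* Vertices are labelled 0,...,n-1 (vertex k here = vertex k+1 of the paper). *)
(* Right modules, paths composed left to right, so P(i) = e_i A is spanned by  *)
(* the paths starting at i: P(i) is uniserial with composition factors       *)
(* S(i), S(i+1), ..., S(i + c i - 1).  Such an algebra is determined (up to    *)
(* isomorphism, independently of K) by its Kupisch series c i = dim P(i):      *)
(*   c (n-1) = 1, c i >= 2 for i < n-1 (I contains no arrow, I <= rad^2),      *)
(*   c i <= c (i+1) + 1 (P(i) rad = quotient of P(i+1)).                       *)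
(* Every such c is the Kupisch series of a linear Nakayama algebra.            *)
Definition kupisch (n : nat) (c : nat -> nat) : Prop :=
  (0 < n)%N /\ c n.-1 = 1%N /\
  (forall i : nat, (i.+1 < n)%N -> (2 <= c i)%N /\ (c i <= (c i.+1).+1)%N).

(* Modules: every indecomposable A-module is uniserial, determined by its top  *)
(* S(a) and socle S(b): Some (a, b) is the interval module with composition    *)
(* factors S(a), ..., S(b) (a quotient of P(a), so b - a + 1 <= c a);          *)
(* None is the zero module.  Only modules of this form occur below.            *)
Definition nmod := option (nat * nat).

(* socle index of P(a) *)
Definition psoc (c : nat -> nat) (a : nat) : nat := (a + c a - 1)%N.

(* first syzygy: kernel of the projective cover P(a) -> M(a,b) *)
Definition syz (c : nat -> nat) (M : nmod) : nmod :=
  match M with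
  | None => None
  | Some (a, b) => if (b.+1 <= psoc c a)%N then Some (b.+1, psoc c a) else None
  end.

Definition is_proj (c : nat -> nat) (M : nmod) : bool :=
  match M with
  | None => true
  | Some (a, b) => b == psoc c a
  end.

(* pd M = 0 if M projective, 1 + pd (Omega M) otherwise; the fuel n+1 is       *)
(* always sufficient (tops of successive syzygies strictly increase).          *)
Fixpoint pd_fuel (c : nat -> nat) (fuel : nat) (M : nmod) : nat :=
  match fuel with
  | 0 => 0%N
  | f.+1 => if is_proj c M then 0%N else (pd_fuel c f (syz c M)).+1
  end.
Definition pdim (n : nat) (c : nat -> nat) (M : nmod) : nat := pd_fuel c n.+1 M.

Definition simple_mod (i : nat) : nmod := Some (i, i).

(* injective envelope I(i) of S(i): the longest uniserial module with socle     *)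
(* S(i), i.e. top S(k) with k the least vertex such that S(i) occurs in P(k).  *)
Definition inj_top (n : nat) (c : nat -> nat) (i : nat) : nat :=
  find (fun k => (i < k + c k)%N) (iota 0 n).
Definition inj_mod (n : nat) (c : nat -> nat) (i : nat) : nmod :=
  Some (inj_top n c i, i).

Definition top_mod (M : nmod) : option nat :=
  match M with None => None | Some (a, _) => Some a end.

(* Ringel's homological bijection: h(S(i)) = top Omega^e(NS), returned as the   *)
(* index of the simple module (None would mean a zero module).                 *)
Definition hom_bij (n : nat) (c : nat -> nat) (i : nat) : option nat :=
  let e := minn (pdim n c (simple_mod i)) (pdim n c (inj_mod n c i)) in
  let NS := if odd e then simple_mod i else inj_mod n c i in
  top_mod (iter e (syz c) NS).

Local Open Scope ring_scope.

(* Cartan matrix: phi i j = dim e_j A e_i = [P(j) : S(i)]. *)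
Definition cartan_mx (n : nat) (c : nat -> nat) : 'M[rat]_n :=
  \matrix_(i < n, j < n) (if ((j <= i)%N && (i < j + c j)%N) then 1 else 0).

Definition coxeter_mx (n : nat) (c : nat -> nat) : 'M[rat]_n :=
  - ((cartan_mx n c)^T *m invmx (cartan_mx n c)).

Definition upper_tri (n : nat) (A : 'M[rat]_n) : Prop :=
  forall i j : 'I_n, (j < i)%N -> A i j = 0.

Definition colperm_mx (n : nat) (p : 'S_n) : 'M[rat]_n :=
  \matrix_(i < n, j < n) (if i == p j then 1 else 0).

Definition bruhat_perm (n : nat) (M : 'M[rat]_n) (p : 'S_n) : Prop :=
  exists U1 U2 : 'M[rat]_n,
    [/\ U1 \in unitmx, U2 \in unitmx, upper_tri U1, upper_tri U2
      & M = U1 *m colperm_mx p *m U2].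

(* Main.v *)
Require Import Defs.
From mathcomp Require Import all_boot all_order all_algebra all_fingroup.
From mathcomp Require Import zify.
Set Implicit Arguments.
Unset Strict Implicit.
Unset Printing Implicit Defensive.

Section Comb.
Variables (n : nat) (c : nat -> nat).
Hypothesis Hc : kupisch n c.

Definition fb (x : nat) : nat := if x < n then x + c x else n.

Lemma c_pos x : x < n -> 0 < c x.
Proof.
case: Hc => n0 [cl H] xn.
case: (ltnP x.+1 n) => h; first by have [] := H x h; lia.
have -> : x = n.-1 by lia.
by rewrite cl.
Qed.

Lemma fb_step x : x.+1 < n -> x + c x <= x.+1 + c x.+1.
Proof. by case: Hc => _ [_ H] h; have [] := H x h; lia. Qed.

Lemma fb_le_n x : fb x <= n.
Proof.
rewrite /fb; case: ifP => // xn.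
case: Hc => n0 [cl H].
have key : forall d, x + d < n -> x + c x <= (x + d) + c (x + d).
  elim=> [|d IH] h; first by rewrite addn0.
  apply: leq_trans (IH _) _; first lia.
  have := @fb_step (x + d) ltac:(lia); rewrite addnS; lia.
have := key (n.-1 - x) ltac:(lia).
have -> : x + (n.-1 - x) = n.-1 by lia.
by rewrite cl; lia.
Qed.

Lemma fb_mono x y : x <= y -> fb x <= fb y.
Proof.
move=> xy; rewrite /fb; case: (ltnP y n) => yn.
  have xn : x < n by lia. rewrite xn.
  have key : forall d, x + d < n -> x + c x <= (x + d) + c (x + d).
    elim=> [|d IH] h; first by rewrite addn0.
    apply: leq_trans (IH _) _; first lia.
    have := @fb_step (x + d) ltac:(lia); rewrite addnS; lia.
  have := key (y - x) ltac:(lia).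
  by have -> : x + (y - x) = y by lia.
by have := fb_le_n x; rewrite /fb.
Qed.

Lemma fb_gt x : x < n -> x < fb x.
Proof. by move=> xn; rewrite /fb xn; have := c_pos xn; lia. Qed.

Lemma psocE a : a < n -> psoc c a = (fb a).-1.
Proof. by move=> an; rewrite /psoc /fb an; lia. Qed.

Lemma iter_mono k x y : x <= y -> iter k fb x <= iter k fb y.
Proof. by elim: k => //= k IH xy; apply: fb_mono; apply: IH. Qed.

Lemma iter_le_n k x : x <= n -> iter k fb x <= n.
Proof. by case: k => //= k _; apply: fb_le_n. Qed.

Definition seqc (p q : nat) (k : nat) : nat :=
  if odd k then iter k./2 fb q else iter k./2 fb p.

Lemma seqcSS p q k : seqc p q k.+2 = fb (seqc p q k).
Proof. by rewrite /seqc /= negbK; case: odd. Qed.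

Lemma seqc0 p q : seqc p q 0 = p. Proof. by []. Qed.
Lemma seqc1 p q : seqc p q 1 = q. Proof. by []. Qed.

Lemma seqc_mono p q k : p <= q -> q <= fb p -> seqc p q k <= seqc p q k.+1.
Proof.
move=> pq qf; elim: k {-2}k (leqnn k) => [|m IH] k km.
  by have -> : k = 0 by lia.
case: k km => [|k] km; first by [].
case: k km => [|k] km; first by rewrite seqcSS.
by rewrite !seqcSS; apply: fb_mono; apply: IH; lia.
Qed.

Lemma seqc_le_n p q k : p <= n -> q <= n -> seqc p q k <= n.
Proof. by move=> pn qn; rewrite /seqc; case: odd; apply: iter_le_n. Qed.

Lemma chain_iter p q k : p < q -> q <= fb p -> p < n ->
  (forall k', k' < k -> seqc p q k'.+1 < seqc p q k'.+2) ->
  iter k (syz c) (Some (p, q.-1)) = Some (seqc p q k, (seqc p q k.+1).-1).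
Proof.
move=> pq qf pn; elim: k => [|k IH] H //=.
rewrite IH; last by move=> k' h; apply: H; lia.
have lt1 : seqc p q k < seqc p q k.+1.
  case: k {IH} H => [|k] H; first by [].
  by apply: H; lia.
have qn : q <= n by apply: leq_trans qf (fb_le_n _).
have skn : seqc p q k < n.
  by apply: leq_trans lt1 (seqc_le_n _ _ _); lia.
have lt2 := H k (ltnSn k).
rewrite /syz psocE // -seqcSS.
have pos : 0 < seqc p q k.+1 by lia.
rewrite prednK //; case: ifP => //; lia.
Qed.

Lemma pd_fuelE fuel M K :
  (forall k, k < K -> ~~ is_proj c (iter k (syz c) M)) ->
  is_proj c (iter K (syz c) M) -> K < fuel -> pd_fuel c fuel M = K.
Proof.
elim: fuel M K => [|f IH] M K H1 H2 H3 //=.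
case: ifP => pM.
  case: K H1 {H2 H3} => // K H1; by have := H1 0 isT; rewrite /= pM.
case: K H1 H2 H3 => [|K] H1 H2 H3; first by rewrite /= pM in H2.
congr S; apply: IH.
- by move=> k kK; rewrite -iterSr; apply: H1.
- by rewrite -iterSr.
- lia.
Qed.


Definition tI (i : nat) : nat := inj_top n c i.

Lemma tI_spec i : i < n ->
  [/\ tI i <= i, i < fb (tI i) & forall u, u < tI i -> fb u <= i].
Proof.
move=> iN; rewrite /tI /inj_top.
set a := (fun k => i < k + c k).
have le : find a (iota 0 n) <= i.
  rewrite leqNgt; apply/negP => h.
  have := before_find 0 h; rewrite nth_iota // add0n /a.
  by have := c_pos iN; lia.
have tn : find a (iota 0 n) < n by lia.
split => //.
- have hs : has a (iota 0 n) by rewrite has_find size_iota.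
  have := nth_find 0 hs; rewrite nth_iota // add0n /a /fb tn; lia.
- move=> u hu; have := before_find 0 hu; rewrite nth_iota; last by lia.
  rewrite add0n /a /fb; have -> : u < n by lia. lia.
Qed.

Definition firstK (p q : nat) : nat :=
  find (fun k => seqc p q k.+1 == seqc p q k.+2) (iota 0 n).

Lemma firstK_spec p q : p < q -> q <= fb p -> p < n ->
  [/\ firstK p q < n,
      (forall k, k < firstK p q -> seqc p q k.+1 < seqc p q k.+2) &
      seqc p q (firstK p q).+1 = seqc p q (firstK p q).+2].
Proof.
move=> pq qf pn.
have qn : q <= n by apply: leq_trans qf (fb_le_n _).
set a := (fun k => seqc p q k.+1 == seqc p q k.+2).
have mono k : seqc p q k <= seqc p q k.+1 by apply: seqc_mono; lia.
have bef k : k < find a (iota 0 n) -> seqc p q k.+1 < seqc p q k.+2.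
  move=> hk.
  have kn : k < n by apply: leq_trans hk _; have := find_size a (iota 0 n); rewrite size_iota.
  have := before_find 0 hk; rewrite nth_iota // add0n /a => /negbT ne.
  by rewrite ltn_neqAle ne mono.
have hs : has a (iota 0 n).
  apply/negPn/negP => nh.
  have hf : find a (iota 0 n) = n.
    by apply/eqP; have := find_size a (iota 0 n); rewrite has_find size_iota in nh; rewrite size_iota; lia.
  have grow m : m <= n -> m.+1 <= seqc p q m.+1.
    elim: m => [|m IH] hm; first by rewrite seqc1; lia.
    have := bef m ltac:(lia); have := IH ltac:(lia); lia.
  have := grow n (leqnn n); have := @seqc_le_n p q n.+1 (ltnW pn) qn; lia.
split => //.
- by rewrite /firstK -/a; rewrite has_find size_iota in hs.
- by apply/eqP; have := nth_find 0 hs; rewrite nth_iota ?add0n //; rewrite has_find size_iota in hs.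
Qed.

Lemma pdimE p q : p < q -> q <= fb p -> p < n ->
  pdim n c (Some (p, q.-1)) = firstK p q.
Proof.
move=> pq qf pn; have [Kn Kb Ke] := firstK_spec pq qf pn.
have qn : q <= n by apply: leq_trans qf (fb_le_n _).
have mono k : seqc p q k <= seqc p q k.+1 by apply: seqc_mono; lia.
have projE k : (forall k', k' < k -> seqc p q k'.+1 < seqc p q k'.+2) ->
    is_proj c (iter k (syz c) (Some (p, q.-1))) = (seqc p q k.+1 == seqc p q k.+2).
  move=> H; rewrite chain_iter //= .
  have lt1 : seqc p q k < seqc p q k.+1.
    case: k H => [|k] H; first by []. by apply: H.
  have skn : seqc p q k < n.
    by apply: leq_trans lt1 (seqc_le_n _ _ _); lia.
  rewrite psocE // -seqcSS.
  have := mono k.+1; lia.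
apply: pd_fuelE.
- move=> k kK; rewrite projE; last by move=> k' h; apply: Kb; lia.
  by have := Kb k kK; lia.
- by rewrite projE // Ke.
- lia.
Qed.

Definition sS i := seqc i i.+1.
Definition sI i := seqc (tI i) i.+1.
Definition KS i := firstK i i.+1.
Definition KI i := firstK (tI i) i.+1.
Definition ee i := minn (KS i) (KI i).
Definition ww i := if odd (ee i) then sS i else sI i.

Lemma valS i : i < n -> [/\ i < i.+1, i.+1 <= fb i & i < n].
Proof. by move=> iN; split => //; apply: fb_gt. Qed.

Lemma valI i : i < n -> [/\ tI i < i.+1, i.+1 <= fb (tI i) & tI i < n].
Proof. by move=> iN; have [h1 h2 _] := tI_spec iN; split => //; lia. Qed.

Lemma seqc_even p q l : seqc p q l.*2 = iter l fb p.
Proof. by rewrite /seqc odd_double doubleK. Qed.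
Lemma seqc_odd p q l : seqc p q l.*2.+1 = iter l fb q.
Proof. by rewrite /seqc /= odd_double /= uphalf_double. Qed.

Lemma interleave i l : i < n ->
  [/\ iter l fb (tI i) <= iter l fb i, iter l fb i <= iter l fb i.+1 &
      iter l fb i.+1 <= iter l.+1 fb (tI i)].
Proof.
move=> iN; have [h1 h2 _] := tI_spec iN.
split; try (apply: iter_mono; lia).
by rewrite iterSr; apply: iter_mono.
Qed.

Lemma ee_spec i : i < n ->
  [/\ (forall k, k < ee i -> sS i k.+1 < sS i k.+2 /\ sI i k.+1 < sI i k.+2),
      ww i (ee i).+1 = ww i (ee i).+2 &
      ee i < n].
Proof.
move=> iN.
have [vS1 vS2 vS3] := valS iN; have [vI1 vI2 vI3] := valI iN.
have [KSn KSb KSe] := firstK_spec vS1 vS2 vS3.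
have [KIn KIb KIe] := firstK_spec vI1 vI2 vI3.
split.
- move=> k; rewrite /ee /KS /KI => hk; split; [apply: KSb | apply: KIb]; lia.
- rewrite -/(KS i) in KSe; rewrite -/(KI i) in KIe.
  rewrite /ww /ee /sS /sI.
  case: (leqP (KS i) (KI i)) => hle.
  + case: ifP => // ev.
    have [l hl] : exists l, KS i = l.*2.
      by exists (KS i)./2; rewrite -[LHS](odd_double_half (KS i)) ev.
    rewrite hl in KSe *.
    rewrite -[l.*2.+2]/((l.+1).*2) seqc_odd seqc_even in KSe.
    rewrite -[l.*2.+2]/((l.+1).*2) seqc_odd seqc_even.
    have [a1 a2 a3] := interleave l iN.
    have [b1 b2 b3] := interleave l.+1 iN.
    lia.
  + case: ifP => // od.
    have [l hl] : exists l, KI i = l.*2.+1.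
      by exists (KI i)./2; rewrite -[LHS](odd_double_half (KI i)) od.
    rewrite hl in KIe *.
    rewrite -[l.*2.+1.+2]/((l.+1).*2.+1) -[l.*2.+1.+1]/((l.+1).*2) seqc_odd seqc_even in KIe.
    rewrite -[l.*2.+1.+2]/((l.+1).*2.+1) -[l.*2.+1.+1]/((l.+1).*2) seqc_odd seqc_even.
    have [b1 b2 b3] := interleave l.+1 iN.
    lia.
- rewrite /ee /KS /KI; lia.
Qed.

Lemma hom_bijE i : i < n -> hom_bij n c i = Some (ww i (ee i)).
Proof.
move=> iN.
have [vS1 vS2 vS3] := valS iN; have [vI1 vI2 vI3] := valI iN.
have [eb _ _] := ee_spec iN.
rewrite /hom_bij.
have -> : pdim n c (simple_mod i) = KS i by apply: (pdimE vS1 vS2 vS3).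
have -> : pdim n c (inj_mod n c i) = KI i by apply: (pdimE vI1 vI2 vI3).
rewrite -/(ee i) /ww.
case: ifP => _.
- rewrite /simple_mod -[(i, i)]/(i, i.+1.-1) chain_iter //.
  by move=> k' h; have [] := eb k' h.
- rewrite /inj_mod -/(tI i) -[(tI i, i)]/(tI i, i.+1.-1) chain_iter //.
  by move=> k' h; have [] := eb k' h.
Qed.


Definition Zc i l := iter l fb (tI i).
Definition Yc i l := iter l fb i.
Definition Xc i l := iter l fb i.+1.

Lemma dataE i : i < n ->
 (~~ odd (ee i) -> [/\ ww i (ee i) = Zc i (ee i)./2, fb (Zc i (ee i)./2) = Xc i (ee i)./2,
     (0 < (ee i)./2 -> Xc i ((ee i)./2).-1 < Zc i (ee i)./2) & Yc i (ee i)./2 < Xc i (ee i)./2]) /\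
 (odd (ee i) -> [/\ ww i (ee i) = Xc i (ee i)./2, fb (Xc i (ee i)./2) = Yc i ((ee i)./2).+1,
     Xc i (ee i)./2 < fb (Zc i (ee i)./2) & Yc i (ee i)./2 < Xc i (ee i)./2]).
Proof.
move=> iN; have [eb ew _] := ee_spec iN.
move: eb ew; rewrite /ww.
move: (ee i) => e eb ew.
have [m hm] : exists m, m = e./2 by eexists.
rewrite -hm.
have ym : Yc i m < Xc i m.
  case: m hm => [|m'] hm; first by rewrite /Yc /Xc.
  have := eb (m'.*2.+1) ltac:(lia); case=> + _.
  by rewrite /sS -[m'.*2.+1.+1]/(m'.+1.*2) -[m'.*2.+1.+2]/(m'.+1.*2.+1) seqc_even seqc_odd.
split => ev.
- rewrite (negbTE ev) in ew *.
  have he : e = m.*2 by have := odd_double_half e; rewrite (negbTE ev); lia.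
  rewrite he in ew *; rewrite /sI seqc_even.
  rewrite /sI -[m.*2.+2]/(m.+1.*2) seqc_odd seqc_even /= in ew.
  split => //.
  case: m hm he ew ym => [|m'] hm he ew ym //= _.
  have := eb (m'.*2) ltac:(lia); case=> _.
  by rewrite /sI -[m'.*2.+2]/(m'.+1.*2) seqc_odd seqc_even.
- rewrite ev in ew *.
  have he : e = m.*2.+1 by have := odd_double_half e; rewrite ev; lia.
  rewrite he in ew *; rewrite /sS seqc_odd.
  rewrite /sS -[m.*2.+1.+1]/(m.+1.*2) -[m.*2.+1.+2]/(m.+1.*2.+1) seqc_odd seqc_even /= in ew.
  split => //.
  have := eb (m.*2) ltac:(lia); case=> _.
  by rewrite /sI -[m.*2.+2]/(m.+1.*2) seqc_odd seqc_even.
Qed.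

Lemma back j l u : j < n -> iter l fb u < iter l fb (tI j) -> iter l.+1 fb u <= iter l fb j.
Proof.
move=> jN; have [_ _ tm] := tI_spec jN.
elim: l u => [|l IH] u h; first by apply: tm.
have h1 : iter l fb u < iter l fb (tI j).
  rewrite ltnNge; apply/negP => h2.
  by have := fb_mono h2; rewrite -!iterS; lia.
rewrite iterS [X in _ <= X]iterS.
by apply: fb_mono; apply: IH.
Qed.

Lemma iterE k d x K : k + d = K -> iter k fb (iter d fb x) = iter K fb x.
Proof. by move=> <-; rewrite iterD. Qed.

Lemma inj_stage i j : i < n -> j < n -> ee j < ee i -> ww i (ee i) <> ww j (ee j).
Proof.
move=> iN jN lt_e ha.
have [Ei Oi] := dataE iN; have [Ej Oj] := dataE jN.
move: (ee i) (ee j) lt_e ha Ei Oi Ej Oj => ei ej lt_e ha Ei Oi Ej Oj.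
have [m hm] : exists m, m = ei./2 by eexists.
have [m' hm'] : exists m', m' = ej./2 by eexists.
rewrite -hm in Ei Oi; rewrite -hm' in Ej Oj.
have hei := odd_double_half ei; have hej := odd_double_half ej.
have bk := back jN.
have fbY k : fb (Yc i k) = Yc i k.+1 by [].
have fbZ k : fb (Zc i k) = Zc i k.+1 by [].
have fbX k : fb (Xc i k) = Xc i k.+1 by [].
case: (boolP (odd ei)) => pi; case: (boolP (odd ej)) => pj.
-
  have [ai fai xzi yxi] := Oi pi; have [aj faj xzj yxj] := Oj pj.
  have mm : m' < m by lia.
  have H := bk m' (iter (m - m').-1 fb i.+1).
  rewrite (@iterE m' _ _ m.-1) in H; last by lia.
  rewrite (@iterE m'.+1 _ _ m) in H; last by lia.
  have hx : (m.-1).+1 = m by lia.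
  have : Xc i m <= Yc j m'.
    apply: H; rewrite ltnNge; apply/negP => h2.
    have := fb_mono h2; rewrite -/(Xc i m.-1) -/(Zc j m') fbX hx; lia.
  lia.
-
  have [ai fai xzi yxi] := Oi pi; have [aj faj xzj yxj] := Ej pj.
  have mm : m' <= m by lia.
  have H := bk m' (iter (m - m') fb i).
  rewrite (@iterE m' _ _ m) in H; last by lia.
  rewrite (@iterE m'.+1 _ _ m.+1) in H; last by lia.
  rewrite -/(Yc i m) -/(Zc j m') -/(Yc i m.+1) -/(Yc j m') in H.
  have : Yc i m.+1 <= Yc j m' by apply: H; lia.
  have e : Xc i m = Zc j m' by rewrite -ai -aj.
  rewrite e in fai; lia.
-
  have [ai fai xzi yxi] := Ei pi; have [aj faj xzj yxj] := Oj pj.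
  have mm : m' < m by lia.
  have H := bk m' (iter (m - m').-1 fb (tI i)).
  rewrite (@iterE m' _ _ m.-1) in H; last by lia.
  rewrite (@iterE m'.+1 _ _ m) in H; last by lia.
  have hx : (m.-1).+1 = m by lia.
  have : Zc i m <= Yc j m'.
    apply: H; rewrite ltnNge; apply/negP => h2.
    have := fb_mono h2; rewrite -/(Zc i m.-1) -/(Zc j m') fbZ hx; lia.
  lia.
-
  have [ai fai xzi yxi] := Ei pi; have [aj faj xzj yxj] := Ej pj.
  have mm : m' < m by lia.
  have H := bk m' (iter (m - m').-1 fb i.+1).
  rewrite (@iterE m' _ _ m.-1) in H; last by lia.
  rewrite (@iterE m'.+1 _ _ m) in H; last by lia.
  have e : Zc i m = Zc j m' by rewrite -ai -aj.
  have : Xc i m <= Yc j m'.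
    apply: H; have := xzi ltac:(lia); rewrite e /Xc /Zc; lia.
  rewrite e in fai; lia.
Qed.

Lemma inj_same i j : i < n -> j < n -> ee i = ee j -> i < j -> ww i (ee i) <> ww j (ee j).
Proof.
move=> iN jN eq_e lt_ij ha.
have [Ei Oi] := dataE iN; have [Ej Oj] := dataE jN.
rewrite -eq_e in Ej Oj ha.
have mon l : Xc i l <= Yc j l by apply: iter_mono.
case: (boolP (odd (ee i))) => pi.
- have [ai fai xzi yxi] := Oi pi; have [aj faj xzj yxj] := Oj pi.
  have := mon (ee i)./2; lia.
- have [ai fai xzi yxi] := Ei pi; have [aj faj xzj yxj] := Ej pi.
  have e : Zc i (ee i)./2 = Zc j (ee i)./2 by rewrite -ai -aj.
  rewrite e in fai; have := mon (ee i)./2; lia.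
Qed.

Lemma hb_inj i j : i < n -> j < n -> ww i (ee i) = ww j (ee j) -> i = j.
Proof.
move=> iN jN ha.
case: (ltngtP (ee i) (ee j)) => he.
- by have := inj_stage jN iN he; rewrite ha.
- by have := inj_stage iN jN he.
- case: (ltngtP i j) => // hij.
  + by have := inj_same iN jN he hij.
  + by have := inj_same jN iN (esym he) hij; rewrite ha.
Qed.

Lemma hb_lt i : i < n -> ww i (ee i) < n.
Proof.
move=> iN; have [eb ew en] := ee_spec iN.
have [vS1 vS2 vS3] := valS iN; have [vI1 vI2 vI3] := valI iN.
have H : forall p q, p < q -> q <= fb p -> p < n -> (forall k, k < ee i -> seqc p q k.+1 < seqc p q k.+2) -> seqc p q (ee i) < n.
  move=> p q pq qf pn hk.
  have qn : q <= n by apply: leq_trans qf (fb_le_n _).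
  move: (ee i) hk => e0; case: e0 => [|e] hk //.
  apply: leq_trans (hk e (ltnSn _)) _; apply: seqc_le_n; lia.
rewrite /ww; case: ifP => _.
- by apply: H => // k hk; have [] := eb k hk.
- by apply: H => // k hk; have [] := eb k hk.
Qed.


Lemma seqc_facts p q E : p < q -> q <= fb p -> p < n ->
  (forall k, k < E -> seqc p q k.+1 < seqc p q k.+2) ->
  [/\ (forall k, seqc p q k.+2 = fb (seqc p q k)),
      (forall k, seqc p q k <= seqc p q k.+1),
      (forall k, k <= E -> seqc p q k < seqc p q k.+1) &
      (forall k, seqc p q k <= n)].
Proof.
move=> pq qf pn H.
have qn : q <= n by apply: leq_trans qf (fb_le_n _).
split.
- by move=> k; rewrite seqcSS.
- by move=> k; apply: seqc_mono; lia.
- by case=> [|k] hk //; apply: H.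
- by move=> k; apply: seqc_le_n; lia.
Qed.

Lemma ww_facts i : i < n ->
  [/\ ww i 0 <= i, ww i 1 = i.+1,
      (forall k, ww i k.+2 = fb (ww i k)) &
      (forall k, ww i k <= ww i k.+1)] /\
  [/\ (forall k, k <= ee i -> ww i k < ww i k.+1),
      ww i (ee i).+1 = ww i (ee i).+2 &
      (forall k, ww i k <= n)].
Proof.
move=> iN; have [eb ew en] := ee_spec iN.
have [vS1 vS2 vS3] := valS iN; have [vI1 vI2 vI3] := valI iN.
have [t1 _ _] := tI_spec iN.
rewrite /ww in ew *; case: ifP => _ in ew *.
- have [a b c' d] := seqc_facts vS1 vS2 vS3 (fun k hk => proj1 (eb k hk)).
  by do 2 split.
- have [a b c' d] := seqc_facts vI1 vI2 vI3 (fun k hk => proj2 (eb k hk)).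
  by do 2 split.
Qed.

End Comb.

Section Mat.
Variables (n : nat) (c : nat -> nat).
Hypothesis Hc : kupisch n c.
Import GRing.Theory.
Local Open Scope ring_scope.

Definition ind (a b r : nat) : rat := ((a <= r)%N && (r < b)%N)%:R.
Definition Cf (a b : nat) : rat := ((b <= a)%N && (a < b + c b)%N)%:R.

Lemma ind_split a b d r : (a <= b)%N -> (b <= d)%N -> ind a d r = ind a b r + ind b d r.
Proof.
move=> ab bd; rewrite /ind.
have [h1|h1] := leqP a r; have [h2|h2] := ltnP r b; have [h3|h3] := ltnP r d;
  rewrite /= ?add0r ?addr0 //; exfalso; lia.
Qed.

Lemma ind_nil a r : ind a a r = 0.
Proof. by rewrite /ind; have [h|h] := leqP a r; rewrite //=; lia. Qed.

Lemma tele (w : nat -> nat) r : (forall k, (w k <= w k.+1)%N) -> forall E,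
  \sum_(l < E.+1) (-1) ^+ l * ind (w l) (w l.+2) r =
  ind (w 0%N) (w 1%N) r + (-1) ^+ E * ind (w E.+1) (w E.+2) r.
Proof.
move=> mono; elim=> [|E IH].
  by rewrite big_ord_recr big_ord0 /= add0r expr0 !mul1r (ind_split _ (mono 0%N) (mono 1%N)).
rewrite big_ord_recr /= IH (ind_split _ (mono E.+1) (mono E.+2)) exprS.
rewrite mulrDr -addrA; congr (_ + _).
by rewrite mulN1r mulNr addrA addrN add0r.
Qed.

Lemma sum_delta (F : nat -> rat) m : (m < n)%N -> \sum_(k < n) F k * ((k : nat) == m)%:R = F m.
Proof.
move=> mn; rewrite (bigD1 (Ordinal mn)) //= eqxx mulr1 big1 ?addr0 //.
move=> k kn; case: eqP => h; last by rewrite mulr0.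
by exfalso; move/eqP: kn; apply; apply: val_inj.
Qed.

Definition Rm : 'M[rat]_n :=
  \matrix_(k < n, i < n) \sum_(l < (ee n c i).+1) (-1) ^+ l * ((k : nat) == ww n c i l)%:R.

Lemma cartanE (r k : 'I_n) : cartan_mx n c r k = Cf r k.
Proof. by rewrite mxE /Cf; case: ifP. Qed.

Lemma CR (r i : 'I_n) : (i < n)%N ->
  (cartan_mx n c *m Rm) r i = \sum_(l < (ee n c i).+1) (-1) ^+ l * Cf r (ww n c i l).
Proof.
move=> iN; have [[w0 w1 wS wm] [wst we wn]] := ww_facts Hc iN.
rewrite mxE.
rewrite /Rm.
under eq_bigr => k _ do rewrite !mxE big_distrr /=.
rewrite exchange_big /=; apply: eq_bigr => l _.
have ln : (ww n c i l < n)%N.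
  apply: leq_trans (wst l _) (wn _); have := ltn_ord l; lia.
rewrite -(sum_delta (fun k => (-1) ^+ l * Cf r k) ln).
apply: eq_bigr => k _; rewrite /Cf mulrCA mulrA; congr (_ * _).
by congr (_ * _); case: (k <= r)%N; case: (r < k + c k)%N.
Qed.


Lemma GR (G : nat -> rat) (i : 'I_n) :
  \sum_(k < n) G k * Rm k i = \sum_(l < (ee n c i).+1) (-1) ^+ l * G (ww n c i l).
Proof.
have iN := ltn_ord i.
have [[w0 w1 wS wm] [wst we wn]] := ww_facts Hc iN.
rewrite /Rm.
under eq_bigr => k _ do rewrite !mxE big_distrr /=.
rewrite exchange_big /=; apply: eq_bigr => l _.
have ln : (ww n c i l < n)%N.
  apply: leq_trans (wst l _) (wn _); have := ltn_ord l; lia.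
rewrite -(sum_delta (fun k => (-1) ^+ l * G k) ln).
by apply: eq_bigr => k _; rewrite mulrCA mulrA.
Qed.

Lemma Cf_ind a b : (b < n)%N -> Cf a b = ind b (fb n c b) a.
Proof. by move=> bn; rewrite /Cf /ind /fb bn. Qed.

Definition Vm : 'M[rat]_n := cartan_mx n c *m Rm.
Definition Wm : 'M[rat]_n := - ((cartan_mx n c)^T *m Rm).

Lemma VmE (r i : 'I_n) : Vm r i = ind (ww n c i 0) i.+1 r.
Proof.
have iN := ltn_ord i.
have [[w0 w1 wS wm] [wst we wn]] := ww_facts Hc iN.
rewrite /Vm mxE.
under eq_bigr => k _ do rewrite cartanE.
rewrite (GR (fun k => Cf r k)).
rewrite (eq_bigr (fun l : 'I_(ee n c i).+1 => (-1) ^+ l * ind (ww n c i l) (ww n c i l.+2) r)); last first.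
  move=> l _; rewrite wS Cf_ind //; apply: leq_trans (wst l _) (wn _); have := ltn_ord l; lia.
by rewrite tele // we ind_nil mulr0 addr0 w1.
Qed.

Lemma CtR (r i : 'I_n) :
  ((cartan_mx n c)^T *m Rm) r i = \sum_(l < (ee n c i).+1) (-1) ^+ l * Cf (ww n c i l) r.
Proof.
rewrite mxE.
under eq_bigr => k _ do rewrite mxE cartanE.
by rewrite (GR (fun k => Cf k r)).
Qed.

Lemma Wm_low (r i : 'I_n) : (ww n c i (ee n c i) < r)%N -> Wm r i = 0.
Proof.
move=> h; have iN := ltn_ord i.
have [[w0 w1 wS wm] [wst we wn]] := ww_facts Hc iN.
have mono : forall l, (l <= ee n c i)%N -> (ww n c i l <= ww n c i (ee n c i))%N.
  move=> l hl; rewrite -(subnK hl); elim: (ee n c i - l)%N => // d IH.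
  by apply: leq_trans IH (wm _).
rewrite /Wm mxE CtR big1 ?oppr0 // => l _.
have := mono l (ltn_ord l); rewrite /Cf.
by have [h1|h1] := leqP r (ww n c i l); rewrite ?mulr0 //=; lia.
Qed.

Lemma Wm_diag (i : 'I_n) (a : 'I_n) : (a : nat) = ww n c i (ee n c i) ->
  Wm a i = - (-1) ^+ (ee n c i).
Proof.
move=> ha; have iN := ltn_ord i.
have [[w0 w1 wS wm] [wst we wn]] := ww_facts Hc iN.
have mono : forall l, (l < ee n c i)%N -> (ww n c i l < ww n c i (ee n c i))%N.
  move=> l hl; rewrite -(subnK hl); elim: (ee n c i - l.+1)%N => [|d IH].
    by rewrite add0n; apply: wst; lia.
  apply: leq_trans IH _; rewrite addSn; apply: wm.
rewrite /Wm mxE CtR big_ord_recr /= big1 ?add0r.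
  rewrite /Cf ha leqnn /=.
  have -> : (ww n c i (ee n c i) < ww n c i (ee n c i) + c (ww n c i (ee n c i)))%N.
    have := c_pos Hc (hb_lt Hc iN); lia.
  by rewrite mulr1.
move=> l _; rewrite /Cf ha.
have := mono l (ltn_ord l).
by have [h1|h1] := leqP (ww n c i (ee n c i)) (ww n c i l); rewrite ?mulr0 //=; lia.
Qed.

End Mat.
Section LinAlg.
Import GRing.Theory.
Local Open Scope ring_scope.
Variable n : nat.
Implicit Types A B : 'M[rat]_n.

Lemma upper_trig A : upper_tri A -> is_trig_mx A^T.
Proof. by move=> uA; apply/is_trig_mxP => i j ij; rewrite mxE uA. Qed.

Lemma upper_det A : upper_tri A -> \det A = \prod_i A i i.
Proof.
move=> uA; rewrite -det_tr det_trig; last exact: upper_trig.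
by apply: eq_bigr => i _; rewrite mxE.
Qed.

Lemma upper_diag A i : upper_tri A -> A \in unitmx -> A i i != 0.
Proof.
move=> uA; rewrite unitmxE unitfE upper_det //.
by rewrite (bigD1 i) //= mulf_eq0 negb_or => /andP[].
Qed.

Lemma upper_mul A B : upper_tri A -> upper_tri B -> upper_tri (A *m B).
Proof.
move=> uA uB i j ji; rewrite mxE big1 // => l _.
case: (ltnP l i) => h; first by rewrite uA // mul0r.
by rewrite uB ?mulr0 //; apply: leq_trans ji h.
Qed.

Lemma upper_inv A : upper_tri A -> A \in unitmx -> upper_tri (invmx A).
Proof.
move=> uA Au.
have key : forall d (r : 'I_n), (n - r <= d)%N -> forall k : 'I_n, (k < r)%N -> invmx A r k = 0.
  elim=> [|d IH] r hr k kr.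
    by have := ltn_ord r; lia.
  have e1 : (A *m invmx A) r k = 0 by rewrite mulmxV // mxE; case: eqP => // h; rewrite h ltnn in kr.
  move: e1; rewrite mxE (bigD1 r) //= big1.
    by rewrite addr0 => /eqP; rewrite mulf_eq0 (negbTE (upper_diag r uA Au)) /= => /eqP.
  move=> l lr; case: (ltngtP l r) => h.
  - by rewrite uA // mul0r.
  - rewrite (IH l) ?mulr0 //; [lia | by apply: ltn_trans kr h].
  - have hl : l = r by apply: val_inj.
    by rewrite hl eqxx in lr.
move=> r k kr; apply: (key (n - r)%N) => //.
Qed.

Lemma perm_le_id (s : 'S_n) : (forall k, (s k <= k)%N) -> forall k, s k = k.
Proof.
move=> H.
have key : forall m (k : 'I_n), (k < m)%N -> s k = k.
  elim=> [|m IH] k km //.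
  case: (ltngtP (s k) k) => h.
  - have e := IH (s k) ltac:(lia).
    by move/perm_inj: e => e; rewrite e ltnn in h.
  - by have := H k; lia.
  - by apply: val_inj.
by move=> k; apply: (key k.+1).
Qed.

Lemma colpermE (p : 'S_n) : colperm_mx p = (perm_mx p)^T.
Proof.
apply/matrixP => i j; rewrite !mxE eq_sym.
by case: eqP.
Qed.

Lemma colperm_unit (p : 'S_n) : colperm_mx p \in unitmx.
Proof. by rewrite colpermE unitmx_tr unitmx_perm. Qed.

Lemma colpermTK (p : 'S_n) : (colperm_mx p)^T *m colperm_mx p = 1%:M.
Proof. by rewrite colpermE trmxK tr_perm_mx -perm_mxM mulgV perm_mx1. Qed.

Lemma bruhat_unique (M : 'M[rat]_n) (p q : 'S_n) :
  bruhat_perm M p -> bruhat_perm M q -> p = q.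
Proof.
move=> [U1 [U2 [u1 u2 t1 t2 e]]] [V1 [V2 [v1 v2 s1 s2 e']]].
set U := invmx V1 *m U1; set V := V2 *m invmx U2.
have eUV : U *m colperm_mx p = colperm_mx q *m V.
  have := congr1 (fun X => invmx V1 *m X *m invmx U2) (etrans (esym e) e').
  rewrite /= !mulmxA mulVmx // mul1mx -!mulmxA mulmxV // mulmx1.
  by rewrite /U /V !mulmxA.
have uU : upper_tri U by apply: upper_mul => //; apply: upper_inv.
have uV : upper_tri V by apply: upper_mul => //; apply: upper_inv.
have Uu : U \in unitmx by rewrite unitmx_mul unitmx_inv v1 u1.
clearbody U V.
have key : forall k, ((q^-1)%g (p k) <= k)%N.
  move=> k; rewrite leqNgt; apply/negP => h.
  have := congr1 (fun X : 'M[rat]_n => X (p k) k) eUV; rewrite /= !mxE.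
  rewrite (bigD1 (p k)) //= big1; last first.
    by move=> l lpk; rewrite /colperm_mx mxE (negbTE lpk) mulr0.
  rewrite (bigD1 ((q^-1)%g (p k))) //= big1; last first.
    move=> l lq; rewrite /colperm_mx mxE; case: eqP => h2; last by rewrite mul0r.
    by move: lq; rewrite h2 permK eqxx.
  rewrite /colperm_mx !mxE eqxx mulr1 addr0 permKV eqxx mul1r addr0 uV //.
  by move=> /eqP; rewrite (negbTE (upper_diag (p k) uU Uu)).
have key' : forall k, ((p * q^-1)%g k <= k)%N by move=> k; rewrite permM; apply: key.
have H := perm_le_id key'.
apply/permP => k; have := H k; rewrite permM => /(congr1 q); rewrite permKV => ->.
by [].
Qed.

End LinAlg.

Section Main.
Import GRing.Theory.
Local Open Scope ring_scope.

Theorem mainTheorem4 (n : nat) (c : nat -> nat) (Hc : kupisch n c) :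
  (exists p : 'S_n, bruhat_perm (coxeter_mx n c) p) /\
  (forall p : 'S_n, bruhat_perm (coxeter_mx n c) p ->
     forall i : 'I_n, hom_bij n c i = Some (nat_of_ord (p i))).
Proof.
pose hf (i : 'I_n) : 'I_n := Ordinal (hb_lt Hc (ltn_ord i)).
have hinj : injective hf.
  move=> i j /(congr1 val) /= h; apply: val_inj.
  exact: (hb_inj Hc (ltn_ord i) (ltn_ord j) h).
pose P := perm hinj.
have PE : forall i : 'I_n, (P i : nat) = ww n c i (ee n c i) by move=> i; rewrite permE.
have hbE : forall i : 'I_n, hom_bij n c i = Some (P i : nat).
  by move=> i; rewrite PE (hom_bijE Hc (ltn_ord i)).
set C := cartan_mx n c.
have Cu : C \in unitmx.
  rewrite unitmxE det_trig; last first.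
    by apply/is_trig_mxP => i j ij; rewrite mxE; case: ifP => //; lia.
  rewrite big1 ?unitr1 // => i _; rewrite mxE leqnn /=.
  by have := c_pos Hc (ltn_ord i); case: ifP => //; lia.
have uV : upper_tri (Vm n c).
  by move=> r i ir; rewrite (VmE Hc) /ind; case: andP => //; lia.
have Vu : Vm n c \in unitmx.
  rewrite unitmxE upper_det // big1 ?unitr1 // => i _.
  have [[w0 _ _ _] _] := ww_facts Hc (ltn_ord i).
  by rewrite (VmE Hc) /ind w0 ltnSn.
have XV : coxeter_mx n c *m Vm n c = Wm n c.
  by rewrite /coxeter_mx /Vm /Wm -/C mulNmx -mulmxA (mulmxA (invmx C)) mulVmx // mul1mx.
have Xu : coxeter_mx n c \in unitmx.
  rewrite /coxeter_mx -scaleN1r unitmxZ ?unitrN1 //.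
  by rewrite unitmx_mul unitmx_tr unitmx_inv Cu.
have exP : bruhat_perm (coxeter_mx n c) P.
  exists (Wm n c *m (colperm_mx P)^T), (invmx (Vm n c)); split.
  - by rewrite -XV unitmx_mul unitmx_tr colperm_unit andbT unitmx_mul Xu Vu.
  - by rewrite unitmx_inv.
  - move=> r a ar; rewrite mxE (bigD1 ((P^-1)%g a)) //= big1.
      rewrite addr0 (Wm_low Hc) ?mul0r // -PE permKV //.
    move=> k kP; rewrite !mxE; case: eqP => h; last by rewrite mulr0.
    by move: kP; rewrite h permK eqxx.
  - exact: upper_inv.
  - by rewrite -(mulmxA (Wm n c)) colpermTK mulmx1 -XV -mulmxA mulmxV // mulmx1.
split; first by exists P.
move=> p bp i; rewrite (bruhat_unique bp exP); exact: hbE.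
Qed.

End Main.
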